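(* Let $m$ be a non-negative integer and let $S=(u_0,\dots,u_{n-1})$ be a finite sequence of elements of $\mathbb{Z}/m\mathbb{Z}$. Then $S$ is antisymmetric if and only if its derived sequence $\partial S$ is antisymmetric and $2\sigma(S)=\sigma(\partial S)=0$.
   Context: $\mathbb{Z}/0\mathbb{Z}=\mathbb{Z}$. A finite sequence $(v_0,\dots,v_{\ell-1})$ is antisymmetric if $v_{\ell-1-j}=-v_j$ for all $j$ (the empty sequence is antisymmetric). For $n\ge2$, $\partial S=(-u_j-u_{j+1})_{j=0}^{n-2}$; for $n\le1$, $\partial S$ is the empty sequence. $\sigma(v_0,\dots,v_{\ell-1})=\sum_{j=0}^{\ell-1}v_j$ (zero for the empty sequence). *)

(* Defs.v *)
(* Elements of Z/mZ are represented by integer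
   representatives; all equalities in Z/mZ are congruences mod m
   (intdiv's (_ == _ %[mod m])%Z; for m = 0 this is equality in Z,
   for m = 1 it is always true). *)
From mathcomp Require Import all_boot all_order all_algebra.
Set Implicit Arguments. Unset Strict Implicit. Unset Printing Implicit Defensive.
Import Order.TTheory GRing.Theory Num.Theory.
Local Open Scope ring_scope.

Definition antisym_mod (m : nat) (v : seq int) : Prop :=
  forall j : nat, (j < size v)%N ->
    (nth 0 v (size v - 1 - j)%N == - nth 0 v j %[mod m%:Z])%Z.

Definition dseq (u : seq int) : seq int :=
  if (2 <= size u)%N then
    [seq - nth 0 u j - nth 0 u j.+1 | j <- iota 0 (size u - 1)]
  else [::].

Definition seqsum (v : seq int) : int := \sum_(x <- v) x.

(* Main.v *)
Require Import Defs.
From mathcomp Require Import all_boot all_order all_algebra.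
From mathcomp Require Import ring zify.
Import Order.TTheory GRing.Theory Num.Theory.
Local Open Scope ring_scope.

Lemma size_dseq (S : seq int) : size (dseq S) = (size S).-1.
Proof.
rewrite /dseq; case: ifP => h; first by rewrite size_map size_iota; lia.
by move: h; case: (size S) => [|[|k]].
Qed.

Lemma nth_dseq (S : seq int) j : (j < (size S).-1)%N ->
  nth 0 (dseq S) j = - nth 0 S j - nth 0 S j.+1.
Proof.
move=> hj; rewrite /dseq ifT; last by lia.
rewrite (nth_map 0%N); last by rewrite size_iota; lia.
by rewrite nth_iota //; lia.
Qed.

Lemma seqsumE (s : seq int) : seqsum s = \sum_(j < size s) nth 0 s j.
Proof. by rewrite /seqsum (big_nth 0) big_mkord. Qed.

Lemma seqsum_dseq (S : seq int) :
  seqsum (dseq S) = \sum_(j < (size S).-1) (- nth 0 S j - nth 0 S j.+1).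
Proof.
rewrite seqsumE size_dseq; apply: eq_bigr => j _; exact: nth_dseq.
Qed.

Lemma sum_identity (S : seq int) : (0 < size S)%N ->
  seqsum (dseq S) + 2 * seqsum S = nth 0 S 0 + nth 0 S (size S).-1.
Proof.
rewrite seqsum_dseq seqsumE.
case: (size S) => [|k] // _ /=.
rewrite mulr2n mulrDl mul1r.
rewrite {1}big_ord_recr /= big_ord_recl /=.
rewrite big_split /= !sumrN.
have -> : \sum_(i < k) nth 0 S (bump 0 i) = \sum_(i < k) nth 0 S i.+1 by [].
ring.
Qed.

Lemma two_sum (S : seq int) :
  2 * seqsum S = \sum_(j < size S) (nth 0 S j + nth 0 S (size S - 1 - j)).
Proof.
rewrite big_split /= -seqsumE.
have -> : \sum_(j < size S) nth 0 S (size S - 1 - j) = seqsum S.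
  rewrite seqsumE -(big_mkord xpredT (fun j => nth 0 S j)).
  rewrite big_rev_mkord subn0; apply: eq_bigr => j _; congr nth; lia.
by rewrite mulr2n mulrDl mul1r.
Qed.

Theorem proposition11 (m : nat) (S : seq int) :
  antisym_mod m S <->
  [/\ antisym_mod m (dseq S),
      (2 * seqsum S == 0 %[mod m%:Z])%Z
    & (seqsum (dseq S) == 0 %[mod m%:Z])%Z].
Proof.
set n := size S.
pose f j := nth 0 S j.
pose w j := f j + f (n - 1 - j)%N.
have antiS : antisym_mod m S <-> (forall j, (j < n)%N -> (m%:Z %| w j)%Z).
  rewrite /antisym_mod -/n; split => H j hj; move: (H j hj);
    by rewrite eqz_mod_dvd opprK addrC.
have key : forall j, (j < n.-1)%N ->
    nth 0 (dseq S) (n.-1 - 1 - j)%N - - nth 0 (dseq S) j = - (w j + w j.+1).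
  move=> j hj; rewrite !nth_dseq -/n; [|lia|lia].
  have -> : ((n.-1 - 1 - j).+1 = n - 1 - j)%N by lia.
  have -> : (n.-1 - 1 - j = n - 1 - j.+1)%N by lia.
  rewrite /w /f; ring.
have antiD : antisym_mod m (dseq S) <->
    (forall j, (j < n.-1)%N -> (m%:Z %| w j + w j.+1)%Z).
  rewrite /antisym_mod size_dseq -/n; split => H j hj; move: (H j hj);
    by rewrite eqz_mod_dvd key // rpredN.
rewrite !eqz_mod_dvd !subr0 two_sum -/n.
have sumw : (0 < n)%N -> seqsum (dseq S) = w 0%N - 2 * seqsum S.
  by move=> hn; rewrite -[seqsum (dseq S)]addr0 -(subrr (2 * seqsum S)) addrA
    sum_identity // /w /f subn0 subn1.
split.
- move/antiS=> H; split.
  + apply/antiD => j hj; apply: rpredD; apply: H; lia.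
  + by apply: rpred_sum => j _; apply: H.
  + case: (posnP n) => [n0|hn].
      by rewrite seqsum_dseq -/n n0 big_ord0.
    rewrite sumw // two_sum -/n; apply: rpredB; first by apply: H.
    by apply: rpred_sum => j _; apply: H.
- case=> /antiD H1 H2 H3; apply/antiS.
  case: (posnP n) => [n0|hn]; first by move=> j; rewrite n0.
  have w0 : (m%:Z %| w 0%N)%Z.
    have -> : w 0%N = seqsum (dseq S) + 2 * seqsum S by rewrite sumw // subrK.
    by apply: rpredD => //; rewrite two_sum.
  elim=> [|j IH] hj //.
  have -> : w j.+1 = (w j + w j.+1) - w j by rewrite addrC addKr.
  apply: rpredB; [apply: H1; lia | apply: IH; lia].
Qed.
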